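(* Let $\Omega_1,\Omega_2\subset\mathbb{C}$ and $Y\subsetneq\mathbb{C}$ be domains. Suppose $f:\Omega_1\to\Omega_2$ is holomorphic with $f(a)=b$ and $f(t)\neq b$ for all $t\in\Omega_1\setminus\{a\}$. Then for every $c\in Y$, $$\mathscr{C}_{\Omega_2}^{Y,c}(f(a))\,|f'(a)|\leq \mathscr{C}_{\Omega_1}^{Y,c}(a).$$
   Context: $\mathbb{D}=\{z\in\mathbb{C}:|z|<1\}$. For domains $\Omega\subset\mathbb{C}$, $Y\subsetneq\mathbb{C}$, and points $w\in\Omega$, $s\in Y$, let $\mathcal{H}^s_w(\Omega,Y)$ be the set of holomorphic maps $h:\Omega\to Y$ with $h(w)=s$ and $h(z)\neq s$ for all $z\in\Omega\setminus\{w\}$. For a domain $Y\subsetneq\mathbb{C}$ and $v\in Y$, the Hurwitz density is $\eta_Y(v)=2/r_Y(v)$, where $r_Y(v)=\max\{h'(0): h:\mathbb{D}\to Y \text{ holomorphic},\ h(0)=v,\ h(z)\neq v \text{ for } z\in\mathbb{D}\setminus\{0\},\ h'(0)>0\}$. The Carathéodory density of the Hurwitz metric of $\Omega$ relative to $Y$ is $\mathscr{C}_{\Omega}^{Y,s}(w)=\sup\{\eta_Y(h(w))|h'(w)| : h\in\mathcal{H}^s_w(\Omega,Y)\}$, defined to be $0$ if $\mathcal{H}^s_w(\Omega,Y)=\emptyset$. *)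

(* Defs.v *)
From Stdlib Require Import Reals ClassicalEpsilon.
From Coquelicot Require Import Coquelicot.
Open Scope R_scope.

Definition is_domain (S : C -> Prop) : Prop :=
  (exists z, S z) /\ open S /\
  (forall U V : C -> Prop, open U -> open V ->
     (forall z, S z -> U z \/ V z) ->
     (forall z, S z -> U z -> V z -> False) ->
     (exists z, S z /\ U z) -> (exists z, S z /\ V z) -> False).

Definition unit_disk (z : C) : Prop := Cmod z < 1.

Definition holo_into (Omega Y : C -> Prop) (h : C -> C) : Prop :=
  forall z, Omega z -> Y (h z) /\ exists d : C, is_derive h z d.

Definition Hclass (Omega Y : C -> Prop) (w s : C) (h : C -> C) : Prop :=
  holo_into Omega Y h /\ h w = s /\ (forall z, Omega z -> z <> w -> h z <> s).

Definition hurwitz_r (Y : C -> Prop) (v : C) : Rbar :=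
  Lub_Rbar (fun x : R => exists h : C -> C, exists d : C,
    Hclass unit_disk Y (RtoC 0) v h /\ is_derive h (RtoC 0) d /\
    Im d = 0 /\ 0 < Re d /\ x = Re d).

Definition hurwitz_eta (Y : C -> Prop) (v : C) : R := 2 / real (hurwitz_r Y v).

Definition cara_density (Omega Y : C -> Prop) (s w : C) : Rbar :=
  let A := fun x : R => exists h : C -> C, exists d : C,
      Hclass Omega Y w s h /\ is_derive h w d /\
      x = hurwitz_eta Y (h w) * Cmod d in
  if excluded_middle_informative (exists x, A x) then Lub_Rbar A else Finite 0.

(* Main.v *)
Require Import Defs.
From Stdlib Require Import Reals Lra ClassicalEpsilon Classical.
From Coquelicot Require Import Coquelicot.

Lemma conv (f : C -> C) z l : @is_derive C_AbsRing C_NormedModule f z l -> @is_derive C_AbsRing (AbsRing_NormedModule C_AbsRing) f z l.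
Proof.
  intros [H1 H2]. split.
  - destruct H1 as [a b [M [HM HM']]]. split; auto. exists M; split; auto.
  - intros x Hx eps. exact (H2 x Hx eps).
Qed.
Lemma conv2 (f : C -> C) z l : @is_derive C_AbsRing (AbsRing_NormedModule C_AbsRing) f z l -> @is_derive C_AbsRing C_NormedModule f z l.
Proof.
  intros [H1 H2]. split.
  - destruct H1 as [a b [M [HM HM']]]. split; auto. exists M; split; auto.
  - intros x Hx eps. exact (H2 x Hx eps).
Qed.

Lemma lub_empty (E : R -> Prop) : (forall x, ~ E x) -> Lub_Rbar E = m_infty.
Proof.
  intros HE. destruct (Lub_Rbar_correct E) as [_ Hl].
  assert (H := Hl m_infty (fun x Ex => False_ind _ (HE x Ex))).
  destruct (Lub_Rbar E); simpl in H; tauto.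
Qed.

Lemma eta_nonneg Y v : 0 <= hurwitz_eta Y v.
Proof.
  unfold hurwitz_eta, hurwitz_r.
  set (S := fun x : R => exists h : C -> C, exists d : C,
    Hclass unit_disk Y (RtoC 0) v h /\ is_derive h (RtoC 0) d /\
    Im d = 0 /\ 0 < Re d /\ x = Re d).
  fold S.
  assert (Hr : 0 <= real (Lub_Rbar S)).
  { destruct (classic (exists x, S x)) as [[x Sx]|Hn].
    - destruct (Lub_Rbar_correct S) as [Hu _].
      assert (Hx := Hu x Sx).
      assert (0 < x) by (destruct Sx as (h & d & _ & _ & _ & Hp & ->); exact Hp).
      destruct (Lub_Rbar S); simpl in *; lra.
    - rewrite lub_empty; [simpl; lra|]. intros x Sx; apply Hn; eauto. }
  destruct (Req_dec (real (Lub_Rbar S)) 0) as [E|E].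
  - rewrite E; unfold Rdiv; rewrite Rinv_0; lra.
  - apply Rle_trans with (2 / real (Lub_Rbar S)); [|lra].
    unfold Rdiv; apply Rmult_le_pos; [lra|]. left; apply Rinv_0_lt_compat; lra.
Qed.

Theorem theorem3p11 (Omega1 Omega2 Y : C -> Prop) (f : C -> C) (a b f'a c : C) :
  is_domain Omega1 -> is_domain Omega2 -> is_domain Y ->
  (exists z : C, ~ Y z) ->
  Hclass Omega1 Omega2 a b f ->
  is_derive f a f'a ->
  Y c ->
  Rbar_le (Rbar_mult (cara_density Omega2 Y c (f a)) (Finite (Cmod f'a)))
          (cara_density Omega1 Y c a).
Proof.
  intros _ _ _ _ [Hf [Hfa Hfb]] Hd Yc.
  unfold cara_density.
  set (A1 := fun x : R => exists h : C -> C, exists d : C,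
      Hclass Omega1 Y a c h /\ is_derive h a d /\
      x = hurwitz_eta Y (h a) * Cmod d).
  set (A2 := fun x : R => exists h : C -> C, exists d : C,
      Hclass Omega2 Y (f a) c h /\ is_derive h (f a) d /\
      x = hurwitz_eta Y (h (f a)) * Cmod d).
  set (m := Cmod f'a).
  assert (Hm : 0 <= m) by apply Cmod_ge_0.
  assert (A1pos : forall x, A1 x -> 0 <= x).
  { intros x (h & d & _ & _ & ->). apply Rmult_le_pos; [apply eta_nonneg|apply Cmod_ge_0]. }
  assert (Hcomp : forall y, A2 y -> A1 (y * m)).
  { intros y (h & d & [Hh [Hhw Hhs]] & Hdh & ->).
    exists (fun z => h (f z)), (scal f'a d). split; [|split].
    - split; [|split].
      + intros z Oz. destruct (Hf z Oz) as [O2 [df Hdf]].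
        destruct (Hh (f z) O2) as [Yh [dh Hdh']]. split; [exact Yh|].
        exists (scal df dh). idtac. exact (is_derive_comp h f z dh df Hdh' (conv _ _ _ Hdf)).
      + exact Hhw.
      + intros z Oz Hz. apply Hhs; [apply Hf; exact Oz|].
        rewrite Hfa. apply Hfb; assumption.
    - exact (is_derive_comp h f a d f'a Hdh (conv _ _ _ Hd)).
    - change (scal f'a d) with (Cmult f'a d). rewrite Cmod_mult. unfold m. ring. }
  assert (L1nonneg : exists x, A1 x -> Rbar_le (Finite 0) (Lub_Rbar A1)).
  { exists 0. intros H. destruct (Lub_Rbar_correct A1) as [Hu _]. 
    apply Rbar_le_trans with (Finite 0); [simpl; lra| exact (Hu 0 H)]. }
  destruct (excluded_middle_informative (exists x, A2 x)) as [[y A2y]|Hn2].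
  - assert (A1y : A1 (y * m)) by (apply Hcomp; exact A2y).
    destruct (excluded_middle_informative (exists x, A1 x)) as [_|Hn1];
      [|exfalso; apply Hn1; eauto].
    destruct (Lub_Rbar_correct A1) as [Hu1 _].
    destruct (Lub_Rbar_correct A2) as [Hu2 Hl2].
    assert (Hy1 := Hu1 _ A1y). assert (Hy2 := Hu2 _ A2y).
    destruct (Lub_Rbar A1) as [s| |] eqn:E1; [| destruct (Rbar_mult _ _); simpl; auto; exact I | simpl in Hy1; contradiction].
    destruct (Req_dec m 0) as [Hm0|Hm0].
    + rewrite Hm0. destruct (Lub_Rbar A2) as [r| |]; simpl in *.
      * rewrite Rmult_0_r. apply Rle_trans with (y*m); [|exact Hy1].
        rewrite Hm0; lra.
      * destruct (Rle_dec 0 0) as [H0|H0]; [|lra].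
        destruct (Rle_lt_or_eq_dec 0 0 H0); [lra|]. simpl.
        apply Rle_trans with (y*m); [|exact Hy1]. rewrite Hm0; lra.
      * contradiction.
    + assert (Hmp : 0 < m) by lra.
      assert (Hb : Rbar_le (Lub_Rbar A2) (Finite (s / m))).
      { apply Hl2. intros x A2x. simpl.
        assert (H := Hu1 _ (Hcomp x A2x)). simpl in H.
        apply Rmult_le_reg_r with m; [exact Hmp|].
        unfold Rdiv. rewrite Rmult_assoc, Rinv_l; lra. }
      destruct (Lub_Rbar A2) as [r| |]; simpl in *; try contradiction.
      apply Rmult_le_reg_r with (/ m); [apply Rinv_0_lt_compat; exact Hmp|].
      rewrite Rmult_assoc, Rinv_r; lra.
  - destruct (excluded_middle_informative (exists x, A1 x)) as [[x A1x]|_];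
      simpl; [|rewrite Rmult_0_l; lra].
    rewrite Rmult_0_l.
    destruct (Lub_Rbar_correct A1) as [Hu1 _].
    assert (H := Hu1 _ A1x). assert (Hx := A1pos _ A1x).
    destruct (Lub_Rbar A1); simpl in *; auto; lra.
Qed.
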